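(* Let $A:[0,T]\to\mathbb{C}^{m\times m}$ be continuous. (i) If $\big[A(t),\int_0^tA(s)ds\big]=0$ for all $t\in[0,T]$, then $\Omega_k\equiv0$ on $[0,T]$ for all $k>1$, so $\Omega(t)=\int_0^tA(s)ds$. (ii) More generally, if for some $n\ge1$, $[A(s_1),[A(s_2),[\cdots,[A(s_n),A(s_{n+1})]\cdots]]]=0$ for all $s_1,\dots,s_{n+1}\in[0,T]$, then $\Omega_k\equiv0$ on $[0,T]$ for all $k>n$.
   Context: Magnus terms: $\Omega_1(t)=\int_0^tA(s)ds$ and for $n\ge2$, $\Omega_n(t)=\sum_{j=1}^{n-1}\frac{B_j}{j!}\sum_{k_1+\cdots+k_j=n-1,\ k_i\ge1}\int_0^t\mathrm{ad}_{\Omega_{k_1}(s)}\cdots\mathrm{ad}_{\Omega_{k_j}(s)}A(s)\,ds$, where $\mathrm{ad}_XY=[X,Y]=XY-YX$ and $\frac{x}{e^x-1}=\sum_j\frac{B_j}{j!}x^j$. $\Omega=\sum_k\Omega_k$. *)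

(* Defs.v *)
From Stdlib Require Import Reals List ClassicalEpsilon Factorial.
Open Scope R_scope.

Definition Cx := (R * R)%type.
Definition Cx0 : Cx := (0, 0).
Definition Cxadd (a b : Cx) : Cx := (fst a + fst b, snd a + snd b).
Definition Cxopp (a : Cx) : Cx := (- fst a, - snd a).
Definition Cxmul (a b : Cx) : Cx :=
  (fst a * fst b - snd a * snd b, fst a * snd b + snd a * fst b).
Definition Cxscal (r : R) (a : Cx) : Cx := (r * fst a, r * snd a).

(* Entries outside the range i, j < m are irrelevant: all operations below
   only use indices < m, and all statements only inspect indices < m. *)
Definition Mat := nat -> nat -> Cx.
Definition mzero : Mat := fun _ _ => Cx0.
Definition madd (X Y : Mat) : Mat := fun i j => Cxadd (X i j) (Y i j).
Definition mopp (X : Mat) : Mat := fun i j => Cxopp (X i j).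
Definition mscal (r : R) (X : Mat) : Mat := fun i j => Cxscal r (X i j).
Definition msum (l : list Mat) : Mat := fold_right madd mzero l.
Definition mmul (m : nat) (X Y : Mat) : Mat :=
  fun i j => fold_right Cxadd Cx0 (map (fun k => Cxmul (X i k) (Y k j)) (seq 0 m)).
Definition comm (m : nat) (X Y : Mat) : Mat := madd (mmul m X Y) (mopp (mmul m Y X)).

Definition mat_eq (m : nat) (X Y : Mat) : Prop :=
  forall i j, (i < m)%nat -> (j < m)%nat -> X i j = Y i j.

Definition Rint (f : R -> R) (a b : R) : R :=
  epsilon (inhabits 0) (fun v => exists pr : Riemann_integrable f a b, RiemannInt pr = v).
Definition mint (F : R -> Mat) (a b : R) : Mat :=
  fun i j => (Rint (fun s => fst (F s i j)) a b, Rint (fun s => snd (F s i j)) a b).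

Definition cont_on (f : R -> R) (a b : R) : Prop :=
  forall x, a <= x <= b -> limit1_in f (fun y => a <= y <= b) (f x) x.
Definition mcont_on (m : nat) (A : R -> Mat) (a b : R) : Prop :=
  forall i j, (i < m)%nat -> (j < m)%nat ->
    cont_on (fun s => fst (A s i j)) a b /\ cont_on (fun s => snd (A s i j)) a b.

(* ---------- Bernoulli numbers, x/(e^x-1) = sum_j B_j/j! x^j  (B_1 = -1/2) ----
   Defined by the standard equivalent recurrence B_0 = 1,
   sum_{k=0}^{N} C(N+1,k) B_k = 0 for N >= 1. *)
Fixpoint bernUpTo (n : nat) : nat -> R :=
  match n with
  | O => fun _ => 1
  | S n' => fun k =>
      if Nat.leb k n' then bernUpTo n' k
      else - / INR (n' + 2) * sum_f_R0 (fun k' => C (n' + 2) k' * bernUpTo n' k') n'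
  end.
Definition bernoulli (n : nat) : R := bernUpTo n n.

(* adsum m om A s j r = sum over compositions k_1+...+k_j = r, k_i >= 1, of
   ad_{om k_1 s} ... ad_{om k_j s} (A s)  (for j = 0: A s if r = 0, else 0). *)
Fixpoint adsum (m : nat) (om : nat -> R -> Mat) (A : R -> Mat) (s : R)
    (j r : nat) : Mat :=
  match j with
  | O => if Nat.eqb r 0 then A s else mzero
  | S j' => msum (map (fun k => comm m (om k s) (adsum m om A s j' (r - k)))
                      (seq 1 r))
  end.

(* Omega_n(t) for n >= 2, given the previous terms om k, 1 <= k < n *)
Definition OmegaStep (m : nat) (om : nat -> R -> Mat) (A : R -> Mat) (n : nat)
    (t : R) : Mat :=
  mint (fun s => msum (map (fun j => mscal (bernoulli j / INR (fact j))
                                           (adsum m om A s j (n - 1)))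
                           (seq 1 (n - 1)))) 0 t.

(* OmegaUpTo n k is Omega_k for 1 <= k <= n *)
Fixpoint OmegaUpTo (m : nat) (A : R -> Mat) (n : nat) : nat -> R -> Mat :=
  match n with
  | O => fun _ _ => mzero
  | S n' => fun k t =>
      if Nat.leb k n' then OmegaUpTo m A n' k t
      else match n' with
           | O => mint A 0 t
           | _ => OmegaStep m (OmegaUpTo m A n') A (S n') t
           end
  end.

Definition Omega (m : nat) (A : R -> Mat) (k : nat) (t : R) : Mat :=
  OmegaUpTo m A k k t.

Fixpoint ncomm (m : nat) (A : R -> Mat) (n : nat) (s : nat -> R) : Mat :=
  match n with
  | O => A (s O)
  | S n' => comm m (A (s O)) (ncomm m A n' (fun i => s (S i)))
  end.

(* Main.v *)
Require Import Defs.
From Stdlib Require Import Reals List ClassicalEpsilon Lra Lia FunctionalExtensionality Factorial Arith.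
Open Scope R_scope.

Definition csum (f : nat -> Cx) (l : list nat) : Cx := fold_right Cxadd Cx0 (map f l).

Lemma Cx_ext (a b : Cx) : fst a = fst b -> snd a = snd b -> a = b.
Proof. destruct a, b; simpl; intros; subst; auto. Qed.

Ltac cxring := repeat match goal with a : Cx |- _ => destruct a end;
  unfold Cxadd, Cxopp, Cxmul, Cxscal, Cx0; apply Cx_ext; simpl; ring.

Lemma csum_nil f : csum f nil = Cx0. Proof. reflexivity. Qed.
Lemma csum_cons f a l : csum f (a :: l) = Cxadd (f a) (csum f l). Proof. reflexivity. Qed.

Lemma csum_add f g l : csum (fun k => Cxadd (f k) (g k)) l = Cxadd (csum f l) (csum g l).
Proof. induction l; simpl. - cxring. - change (fold_right Cxadd Cx0 (map (fun k => Cxadd (f k) (g k)) l)) with (csum (fun k => Cxadd (f k) (g k)) l) in IHl.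
 unfold csum in *; simpl; rewrite IHl. generalize (fold_right Cxadd Cx0 (map f l)) (fold_right Cxadd Cx0 (map g l)). intros; cxring. Qed.

Lemma csum_opp f l : csum (fun k => Cxopp (f k)) l = Cxopp (csum f l).
Proof. induction l; unfold csum in *; simpl. - cxring. - rewrite IHl; generalize (fold_right Cxadd Cx0 (map f l)); intros; cxring. Qed.

Lemma csum_mull c f l : csum (fun k => Cxmul c (f k)) l = Cxmul c (csum f l).
Proof. induction l; unfold csum in *; simpl. - cxring. - rewrite IHl; generalize (fold_right Cxadd Cx0 (map f l)); intros; cxring. Qed.

Lemma csum_mulr c f l : csum (fun k => Cxmul (f k) c) l = Cxmul (csum f l) c.
Proof. induction l; unfold csum in *; simpl. - cxring. - rewrite IHl; generalize (fold_right Cxadd Cx0 (map f l)); intros; cxring. Qed.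

Lemma csum_scal r f l : csum (fun k => Cxscal r (f k)) l = Cxscal r (csum f l).
Proof. induction l; unfold csum in *; simpl. - cxring. - rewrite IHl; generalize (fold_right Cxadd Cx0 (map f l)); intros; cxring. Qed.

Lemma csum_ext f g l : (forall k, In k l -> f k = g k) -> csum f l = csum g l.
Proof. induction l; simpl; intros H; auto. unfold csum in *; simpl; rewrite H, IHl; auto. Qed.

Lemma csum_zero f l : (forall k, In k l -> f k = Cx0) -> csum f l = Cx0.
Proof. induction l; simpl; intros H; auto. unfold csum in *; simpl; rewrite H, IHl; auto. cxring. Qed.

Lemma csum_swap (F : nat -> nat -> Cx) l1 l2 :
  csum (fun k => csum (fun j => F k j) l2) l1 = csum (fun j => csum (fun k => F k j) l1) l2.
Proof.
  induction l1; simpl.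
  - symmetry; apply csum_zero; intros; reflexivity.
  - rewrite csum_cons, IHl1. rewrite <- csum_add. reflexivity.
Qed.

Lemma mmul_entry m X Y i j : mmul m X Y i j = csum (fun k => Cxmul (X i k) (Y k j)) (seq 0 m).
Proof. reflexivity. Qed.

Lemma mmul_assoc m X Y Z : mmul m (mmul m X Y) Z = mmul m X (mmul m Y Z).
Proof.
  apply functional_extensionality; intro i; apply functional_extensionality; intro j.
  rewrite !mmul_entry.
  transitivity (csum (fun k => csum (fun l => Cxmul (X i l) (Cxmul (Y l k) (Z k j))) (seq 0 m)) (seq 0 m)).
  - apply csum_ext; intros k _. rewrite mmul_entry, <- csum_mulr. apply csum_ext; intros; cxring.
  - rewrite csum_swap. apply csum_ext; intros l _. rewrite mmul_entry, <- csum_mull. reflexivity.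
Qed.

Lemma mmul_addl m X Y Z : mmul m (madd X Y) Z = madd (mmul m X Z) (mmul m Y Z).
Proof. do 2 (apply functional_extensionality; intro). unfold madd at 2. rewrite !mmul_entry, <- csum_add.
 apply csum_ext; intros; unfold madd; cxring. Qed.
Lemma mmul_addr m X Y Z : mmul m X (madd Y Z) = madd (mmul m X Y) (mmul m X Z).
Proof. do 2 (apply functional_extensionality; intro). unfold madd at 2. rewrite !mmul_entry, <- csum_add.
 apply csum_ext; intros; unfold madd; cxring. Qed.
Lemma mmul_oppl m X Z : mmul m (mopp X) Z = mopp (mmul m X Z).
Proof. do 2 (apply functional_extensionality; intro). unfold mopp at 2. rewrite !mmul_entry, <- csum_opp.
 apply csum_ext; intros; unfold mopp; cxring. Qed.
Lemma mmul_oppr m X Z : mmul m X (mopp Z) = mopp (mmul m X Z).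
Proof. do 2 (apply functional_extensionality; intro). unfold mopp at 2. rewrite !mmul_entry, <- csum_opp.
 apply csum_ext; intros; unfold mopp; cxring. Qed.
Lemma mmul_scall m r X Z : mmul m (mscal r X) Z = mscal r (mmul m X Z).
Proof. do 2 (apply functional_extensionality; intro). unfold mscal at 2. rewrite !mmul_entry, <- csum_scal.
 apply csum_ext; intros; unfold mscal; cxring. Qed.
Lemma mmul_scalr m r X Z : mmul m X (mscal r Z) = mscal r (mmul m X Z).
Proof. do 2 (apply functional_extensionality; intro). unfold mscal at 2. rewrite !mmul_entry, <- csum_scal.
 apply csum_ext; intros; unfold mscal; cxring. Qed.
Lemma mmul_0l m Z : mmul m mzero Z = mzero.
Proof. do 2 (apply functional_extensionality; intro). rewrite mmul_entry. apply csum_zero; intros; unfold mzero; cxring. Qed.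
Lemma mmul_0r m Z : mmul m Z mzero = mzero.
Proof. do 2 (apply functional_extensionality; intro). rewrite mmul_entry. apply csum_zero; intros; unfold mzero; cxring. Qed.

Ltac mfin := apply functional_extensionality; intro; apply functional_extensionality; intro;
  unfold madd, mopp, mscal, mzero;
  repeat match goal with |- context [mmul ?m ?X ?Y ?i ?j] => generalize (mmul m X Y i j); intro end;
  cxring.

Lemma comm_anti m X Y : comm m X Y = mopp (comm m Y X).
Proof. unfold comm; mfin. Qed.

Lemma comm_addl m X Y Z : comm m (madd X Y) Z = madd (comm m X Z) (comm m Y Z).
Proof. unfold comm; rewrite mmul_addl, mmul_addr; mfin. Qed.
Lemma comm_addr m X Y Z : comm m X (madd Y Z) = madd (comm m X Y) (comm m X Z).
Proof. unfold comm; rewrite mmul_addl, mmul_addr; mfin. Qed.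
Lemma comm_oppl m X Z : comm m (mopp X) Z = mopp (comm m X Z).
Proof. unfold comm; rewrite mmul_oppl, mmul_oppr; mfin. Qed.
Lemma comm_oppr m X Z : comm m X (mopp Z) = mopp (comm m X Z).
Proof. unfold comm; rewrite mmul_oppl, mmul_oppr; mfin. Qed.
Lemma comm_scall m r X Z : comm m (mscal r X) Z = mscal r (comm m X Z).
Proof. unfold comm; rewrite mmul_scall, mmul_scalr; mfin. Qed.
Lemma comm_scalr m r X Z : comm m X (mscal r Z) = mscal r (comm m X Z).
Proof. unfold comm; rewrite mmul_scall, mmul_scalr; mfin. Qed.
Lemma comm_0l m Z : comm m mzero Z = mzero.
Proof. unfold comm; rewrite mmul_0l, mmul_0r; mfin. Qed.
Lemma comm_0r m Z : comm m Z mzero = mzero.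
Proof. unfold comm; rewrite mmul_0l, mmul_0r; mfin. Qed.

Lemma jacobi m P Q Y : comm m (comm m P Q) Y = madd (comm m P (comm m Q Y)) (mopp (comm m Q (comm m P Y))).
Proof.
  unfold comm. rewrite !mmul_addl, !mmul_addr, !mmul_oppl, !mmul_oppr, !mmul_assoc. mfin.
Qed.

Lemma meq_refl m X : mat_eq m X X. Proof. intros i j _ _; auto. Qed.
Lemma meq_sym m X Y : mat_eq m X Y -> mat_eq m Y X. Proof. intros H i j a b; symmetry; auto. Qed.
Lemma meq_trans m X Y Z : mat_eq m X Y -> mat_eq m Y Z -> mat_eq m X Z.
Proof. intros H1 H2 i j a b; rewrite H1; auto. Qed.

Lemma mmul_compat m X X' Y Y' : mat_eq m X X' -> mat_eq m Y Y' -> mat_eq m (mmul m X Y) (mmul m X' Y').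
Proof. intros H1 H2 i j a b. rewrite !mmul_entry. apply csum_ext; intros k Hk.
 apply in_seq in Hk. rewrite H1, H2; auto; lia. Qed.
Lemma madd_compat m X X' Y Y' : mat_eq m X X' -> mat_eq m Y Y' -> mat_eq m (madd X Y) (madd X' Y').
Proof. intros H1 H2 i j a b. unfold madd; rewrite H1, H2; auto. Qed.
Lemma mopp_compat m X X' : mat_eq m X X' -> mat_eq m (mopp X) (mopp X').
Proof. intros H1 i j a b. unfold mopp; rewrite H1; auto. Qed.
Lemma mscal_compat m r X X' : mat_eq m X X' -> mat_eq m (mscal r X) (mscal r X').
Proof. intros H1 i j a b. unfold mscal; rewrite H1; auto. Qed.
Lemma comm_compat m X X' Y Y' : mat_eq m X X' -> mat_eq m Y Y' -> mat_eq m (comm m X Y) (comm m X' Y').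
Proof. intros; unfold comm; apply madd_compat; [|apply mopp_compat]; apply mmul_compat; auto. Qed.

Lemma comm_zl m X Y : mat_eq m X mzero -> mat_eq m (comm m X Y) mzero.
Proof. intros; rewrite <- (comm_0l m Y). apply comm_compat; auto; apply meq_refl. Qed.
Lemma comm_zr m X Y : mat_eq m Y mzero -> mat_eq m (comm m X Y) mzero.
Proof. intros; rewrite <- (comm_0r m X). apply comm_compat; auto; apply meq_refl. Qed.
Lemma mscal_z m r X : mat_eq m X mzero -> mat_eq m (mscal r X) mzero.
Proof. intros H i j a b; unfold mscal; rewrite H; auto. unfold mzero, Cxscal, Cx0; simpl; f_equal; ring. Qed.

Lemma msum_cons x l : msum (x :: l) = madd x (msum l). Proof. reflexivity. Qed.

Lemma msum_compat m (f g : nat -> Mat) l : (forall j, In j l -> mat_eq m (f j) (g j)) ->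
  mat_eq m (msum (map f l)) (msum (map g l)).
Proof. induction l; intros H. apply meq_refl. cbn [map]; rewrite !msum_cons. apply madd_compat.
 apply H; left; auto. apply IHl; intros; apply H; right; auto. Qed.

Lemma msum_z m (f : nat -> Mat) l : (forall j, In j l -> mat_eq m (f j) mzero) -> mat_eq m (msum (map f l)) mzero.
Proof. induction l; intros H. apply meq_refl. cbn [map]; rewrite msum_cons.
 assert (H1 : mat_eq m (f a) mzero) by (apply H; left; auto).
 assert (H2 : mat_eq m (msum (map f l)) mzero) by (apply IHl; intros; apply H; right; auto).
 intros i j a0 b. unfold madd. rewrite H1, H2 by auto.
 unfold mzero, Cxadd, Cx0; simpl; f_equal; ring. Qed.
Definition adch m (A : R -> Mat) (ss : list R) (X : Mat) : Mat :=
  fold_right (fun s Y => comm m (A s) Y) X ss.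

Lemma adch_app m A l1 l2 X : adch m A (l1 ++ l2) X = adch m A l1 (adch m A l2 X).
Proof. unfold adch; rewrite fold_right_app; auto. Qed.

Lemma adch_compat m A ss X Y : mat_eq m X Y -> mat_eq m (adch m A ss X) (adch m A ss Y).
Proof. induction ss; simpl; intros; auto. apply comm_compat; auto. apply meq_refl. Qed.

Lemma adch_z m A ss X : mat_eq m X mzero -> mat_eq m (adch m A ss X) mzero.
Proof. induction ss; simpl; intros; auto. apply comm_zr; auto. Qed.

Lemma adch_add m A ss X Y : adch m A ss (madd X Y) = madd (adch m A ss X) (adch m A ss Y).
Proof. induction ss; simpl; auto. rewrite IHss, comm_addr; auto. Qed.
Lemma adch_opp m A ss X : adch m A ss (mopp X) = mopp (adch m A ss X).
Proof. induction ss; simpl; auto. rewrite IHss, comm_oppr; auto. Qed.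
Lemma adch_scal m A ss r X : adch m A ss (mscal r X) = mscal r (adch m A ss X).
Proof. induction ss; simpl; auto. rewrite IHss, comm_scalr; auto. Qed.
Lemma adch_0 m A ss : adch m A ss mzero = mzero.
Proof. induction ss; simpl; auto. rewrite IHss, comm_0r; auto. Qed.

Lemma ncomm_adch m A l s : ncomm m A (length l) (fun i => nth i (l ++ s :: nil) 0) = adch m A l (A s).
Proof. induction l; simpl; auto. f_equal. apply IHl. Qed.

Lemma cont_plus f g a b : cont_on f a b -> cont_on g a b -> cont_on (fun x => f x + g x) a b.
Proof. intros H1 H2 x Hx. apply limit_plus; auto. Qed.
Lemma cont_mult f g a b : cont_on f a b -> cont_on g a b -> cont_on (fun x => f x * g x) a b.
Proof. intros H1 H2 x Hx. apply limit_mul; auto. Qed.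
Lemma cont_opp f a b : cont_on f a b -> cont_on (fun x => - f x) a b.
Proof. intros H1 x Hx. apply limit_Ropp; auto. Qed.
Lemma cont_const c a b : cont_on (fun _ => c) a b.
Proof. intros x Hx. exact (limit_free (fun _ => c) _ x x). Qed.
Lemma cont_ext f g a b : (forall x, f x = g x) -> cont_on f a b -> cont_on g a b.
Proof. intros H; replace g with f; auto. apply functional_extensionality; auto. Qed.

Definition CC (T : R) (h : R -> Cx) : Prop :=
  cont_on (fun s => fst (h s)) 0 T /\ cont_on (fun s => snd (h s)) 0 T.

Lemma CC_add T h1 h2 : CC T h1 -> CC T h2 -> CC T (fun s => Cxadd (h1 s) (h2 s)).
Proof. intros [] []; split; simpl; apply cont_plus; auto. Qed.
Lemma CC_opp T h1 : CC T h1 -> CC T (fun s => Cxopp (h1 s)).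
Proof. intros []; split; simpl; apply cont_opp; auto. Qed.
Lemma CC_mul T h1 h2 : CC T h1 -> CC T h2 -> CC T (fun s => Cxmul (h1 s) (h2 s)).
Proof. intros [] []; split; simpl; unfold Rminus; apply cont_plus; try apply cont_opp; apply cont_mult; auto. Qed.
Lemma CC_scal T r h1 : CC T h1 -> CC T (fun s => Cxscal r (h1 s)).
Proof. intros []; split; simpl; apply cont_mult; auto; apply cont_const. Qed.
Lemma CC_const T c : CC T (fun _ => c).
Proof. split; apply cont_const. Qed.
Lemma CC_csum T (h : nat -> R -> Cx) l : (forall k, In k l -> CC T (h k)) ->
  CC T (fun s => csum (fun k => h k s) l).
Proof. induction l; intros H. apply (CC_const T Cx0).
  unfold csum; simpl. apply CC_add. apply H; left; auto. apply IHl; intros; apply H; right; auto. Qed.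

Definition GM (m : nat) (T : R) (F : R -> Mat) : Prop :=
  forall i j, (i < m)%nat -> (j < m)%nat -> CC T (fun s => F s i j).

Lemma GM_const m T X : GM m T (fun _ => X).
Proof. intros i j _ _; apply CC_const. Qed.
Lemma GM_add m T F G : GM m T F -> GM m T G -> GM m T (fun s => madd (F s) (G s)).
Proof. intros H1 H2 i j a b; unfold madd; apply CC_add; auto. Qed.
Lemma GM_opp m T F : GM m T F -> GM m T (fun s => mopp (F s)).
Proof. intros H1 i j a b; unfold mopp; apply CC_opp; auto. Qed.
Lemma GM_scal m T r F : GM m T F -> GM m T (fun s => mscal r (F s)).
Proof. intros H1 i j a b; unfold mscal; apply CC_scal; auto. Qed.
Lemma GM_mmul m T F G : GM m T F -> GM m T G -> GM m T (fun s => mmul m (F s) (G s)).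
Proof. intros H1 H2 i j a b. unfold mmul.
  apply (CC_csum T (fun k s => Cxmul (F s i k) (G s k j))).
  intros k Hk; apply in_seq in Hk. apply CC_mul; [apply H1|apply H2]; auto; lia. Qed.
Lemma GM_comm m T F G : GM m T F -> GM m T G -> GM m T (fun s => comm m (F s) (G s)).
Proof. intros; unfold comm. apply GM_add; [|apply GM_opp]; apply GM_mmul; auto. Qed.
Lemma GM_msum m T (G : nat -> R -> Mat) l : (forall j, In j l -> GM m T (G j)) ->
  GM m T (fun s => msum (map (fun j => G j s) l)).
Proof. induction l; intros H. apply (GM_const m T mzero).
  cbn [map]. apply (GM_add m T (G a) (fun s => msum (map (fun j => G j s) l))).
  apply H; left; auto. apply IHl; intros; apply H; right; auto. Qed.

Definition IntOK (a b : R) (f : R -> R) (v : R) : Prop :=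
  exists pr : Riemann_integrable f a b, RiemannInt pr = v.

Lemma Rint_IntOK a b f v : IntOK a b f v -> Rint f a b = v.
Proof.
  intros [pr Hpr]. unfold Rint.
  destruct (epsilon_spec (inhabits 0) (fun v => exists pr : Riemann_integrable f a b, RiemannInt pr = v)
    (ex_intro _ (RiemannInt pr) (ex_intro _ pr eq_refl))) as [pr' Hpr'].
  rewrite <- Hpr', <- Hpr. apply RiemannInt_P5.
Qed.

Lemma IntOK_add a b f g v w : IntOK a b f v -> IntOK a b g w -> IntOK a b (fun x => f x + g x) (v + w).
Proof.
  intros [p1 H1] [p2 H2].
  pose proof (RiemannInt_P10 1 p1 p2) as p3.
  pose proof (RiemannInt_P13 p1 p2 p3) as E.
  assert (Ef : (fun x => f x + 1 * g x) = (fun x => f x + g x)) by (apply functional_extensionality; intro; ring).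
  revert p3 E. rewrite Ef. intros p3 E. exists p3. rewrite E, H1, H2; ring.
Qed.

Lemma IntOK_0 a b : IntOK a b (fun _ => 0) 0.
Proof. exists (RiemannInt_P14 a b 0). pose proof (RiemannInt_P15 (RiemannInt_P14 a b 0)) as E. rewrite Rmult_0_l in E. exact E. Qed.

Lemma IntOK_scal a b c f v : IntOK a b f v -> IntOK a b (fun x => c * f x) (c * v).
Proof.
  intros [p1 H1].
  pose proof (RiemannInt_P10 c (RiemannInt_P14 a b 0) p1) as p3.
  pose proof (RiemannInt_P13 (RiemannInt_P14 a b 0) p1 p3) as E.
  rewrite RiemannInt_P15 in E.
  assert (Ef : (fun x => fct_cte 0 x + c * f x) = (fun x => c * f x)) by (apply functional_extensionality; intro; unfold fct_cte; ring).
  revert p3 E. rewrite Ef. intros p3 E. exists p3. rewrite E, H1; ring.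
Qed.

Lemma IntOK_opp a b f v : IntOK a b f v -> IntOK a b (fun x => - f x) (- v).
Proof.
  intros H. pose proof (IntOK_scal a b (-1) f v H) as H'.
  assert (Ef : (fun x => -1 * f x) = (fun x => - f x)) by (apply functional_extensionality; intro; ring).
  rewrite Ef in H'. replace (- v) with (-1 * v) by ring. auto.
Qed.

Lemma IntOK_ext_on a b f g v : a <= b -> (forall x, a <= x <= b -> f x = g x) -> IntOK a b f v -> IntOK a b g v.
Proof.
  intros Hab H [p Hp].
  assert (pg : Riemann_integrable g a b).
  { refine (@Riemann_integrable_ext f g a b _ p). intros x Hx; apply H.
    rewrite Rmin_left, Rmax_right in Hx; auto. }
  exists pg. rewrite <- Hp. symmetry; apply RiemannInt_P18; auto. intros; apply H; lra.
Qed.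

Lemma Rint_zero f t : 0 <= t -> (forall u, 0 <= u <= t -> f u = 0) -> Rint f 0 t = 0.
Proof.
  intros Ht H. apply Rint_IntOK. apply (IntOK_ext_on 0 t (fun _ => 0)); auto.
  intros; symmetry; auto. apply IntOK_0.
Qed.

Definition clamp (T x : R) : R := Rmax 0 (Rmin T x).

Lemma clamp_in T x : 0 <= T -> 0 <= clamp T x <= T.
Proof. intros; unfold clamp, Rmax, Rmin; repeat destruct Rle_dec; lra. Qed.
Lemma clamp_id T x : 0 <= x <= T -> clamp T x = x.
Proof. intros; unfold clamp, Rmax, Rmin; repeat destruct Rle_dec; lra. Qed.
Lemma clamp_lip T x y : 0 <= T -> Rabs (clamp T y - clamp T x) <= Rabs (y - x).
Proof. intros; unfold clamp, Rmax, Rmin; repeat destruct Rle_dec;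
  unfold Rabs; repeat destruct Rcase_abs; lra. Qed.

Lemma cont_clamp f T : 0 <= T -> cont_on f 0 T -> forall x, continuity_pt (fun y => f (clamp T y)) x.
Proof.
  intros HT H x. unfold continuity_pt, continue_in, limit1_in, limit_in. simpl.
  intros eps Heps.
  destruct (H (clamp T x) (clamp_in T x HT) eps Heps) as [alp [Halp Hc]].
  exists alp; split; auto. intros y [_ Hy]. simpl in Hc.
  destruct (Req_dec (clamp T y) (clamp T x)) as [E|E].
  - rewrite E. unfold R_dist; rewrite Rminus_diag, Rabs_R0; auto.
  - apply Hc. split. apply clamp_in; auto. unfold R_dist in *.
    eapply Rle_lt_trans. apply clamp_lip; auto. auto.
Qed.

Lemma IntOK_cont f T t : cont_on f 0 T -> 0 <= t <= T -> IntOK 0 t f (Rint f 0 t).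
Proof.
  intros H Ht.
  assert (pg : Riemann_integrable (fun y => f (clamp T y)) 0 t).
  { apply continuity_implies_RiemannInt. lra. intros; apply cont_clamp; auto; lra. }
  assert (pf : Riemann_integrable f 0 t).
  { refine (@Riemann_integrable_ext (fun y => f (clamp T y)) f 0 t _ pg).
    intros x Hx; rewrite Rmin_left, Rmax_right in Hx; try lra. rewrite clamp_id; auto; lra. }
  assert (Hi : IntOK 0 t f (RiemannInt pf)) by (exists pf; auto).
  rewrite (Rint_IntOK _ _ _ _ Hi). auto.
Qed.

Lemma cont_Rint f T : 0 < T -> cont_on f 0 T -> cont_on (fun t => Rint f 0 t) 0 T.
Proof.
  intros HT H.
  assert (h : 0 <= T) by lra.
  assert (C0 : forall x, 0 <= x <= T -> continuity_pt (fun y => f (clamp T y)) x)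
    by (intros; apply cont_clamp; auto).
  set (P := primitive h (FTC_P1 h C0)).
  assert (EP : forall x, 0 <= x <= T -> P x = Rint f 0 x).
  { intros x Hx. unfold P, primitive.
    destruct (Rle_dec 0 x); [|lra]. destruct (Rle_dec x T); [|lra].
    symmetry; apply Rint_IntOK.
    apply (IntOK_ext_on 0 x (fun y => f (clamp T y))); try lra.
    intros; rewrite clamp_id; auto; lra.
    eexists; reflexivity. }
  intros x Hx.
  assert (CP : continuity_pt P x).
  { apply derivable_continuous_pt. exists (f (clamp T x)). exact (@RiemannInt_P28 (fun y => f (clamp T y)) 0 T x h C0 Hx). }
  unfold continuity_pt, continue_in, limit1_in, limit_in in CP |- *. simpl in *.
  intros eps Heps. destruct (CP eps Heps) as [alp [Halp Hc]].
  exists alp; split; auto. intros y [Hy Hd].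
  destruct (Req_dec y x) as [E|E].
  - subst. unfold R_dist; rewrite Rminus_diag, Rabs_R0; auto.
  - rewrite <- !EP; auto. apply Hc. split; auto. unfold D_x, no_cond; split; auto.
Qed.

Lemma IntOK_fext a b f g v w : (forall x, f x = g x) -> v = w -> IntOK a b f v -> IntOK a b g w.
Proof. intros H E; subst; replace g with f; auto. apply functional_extensionality; auto. Qed.

Definition CIntOK (a b : R) (h : R -> Cx) (v : Cx) : Prop :=
  IntOK a b (fun x => fst (h x)) (fst v) /\ IntOK a b (fun x => snd (h x)) (snd v).

Lemma CIntOK_add a b h1 h2 v1 v2 : CIntOK a b h1 v1 -> CIntOK a b h2 v2 ->
  CIntOK a b (fun x => Cxadd (h1 x) (h2 x)) (Cxadd v1 v2).
Proof. intros [] []; split; simpl; apply IntOK_add; auto. Qed.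
Lemma CIntOK_opp a b h1 v1 : CIntOK a b h1 v1 -> CIntOK a b (fun x => Cxopp (h1 x)) (Cxopp v1).
Proof. intros []; split; simpl; apply IntOK_opp; auto. Qed.
Lemma CIntOK_0 a b : CIntOK a b (fun _ => Cx0) Cx0.
Proof. split; simpl; apply IntOK_0. Qed.
Lemma IntOK_lin2 a b p q f g v w : IntOK a b f v -> IntOK a b g w ->
  IntOK a b (fun x => p * f x + q * g x) (p * v + q * w).
Proof. intros; apply IntOK_add; apply IntOK_scal; auto. Qed.

Lemma CIntOK_mull a b c h1 v1 : CIntOK a b h1 v1 -> CIntOK a b (fun x => Cxmul c (h1 x)) (Cxmul c v1).
Proof. intros [H1 H2]; split; simpl.
  - apply (IntOK_fext a b (fun x => fst c * fst (h1 x) + (- snd c) * snd (h1 x)) _ (fst c * fst v1 + (- snd c) * snd v1)).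
    intros; ring. ring. apply IntOK_lin2; auto.
  - apply (IntOK_fext a b (fun x => fst c * snd (h1 x) + snd c * fst (h1 x)) _ (fst c * snd v1 + snd c * fst v1)).
    intros; ring. ring. apply IntOK_lin2; auto.
Qed.
Lemma CIntOK_mulr a b c h1 v1 : CIntOK a b h1 v1 -> CIntOK a b (fun x => Cxmul (h1 x) c) (Cxmul v1 c).
Proof. intros [H1 H2]; split; simpl.
  - apply (IntOK_fext a b (fun x => fst c * fst (h1 x) + (- snd c) * snd (h1 x)) _ (fst c * fst v1 + (- snd c) * snd v1)).
    intros; ring. ring. apply IntOK_lin2; auto.
  - apply (IntOK_fext a b (fun x => snd c * fst (h1 x) + fst c * snd (h1 x)) _ (snd c * fst v1 + fst c * snd v1)).
    intros; ring. ring. apply IntOK_lin2; auto.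
Qed.
Lemma CIntOK_csum a b (h : nat -> R -> Cx) (v : nat -> Cx) l :
  (forall k, In k l -> CIntOK a b (h k) (v k)) ->
  CIntOK a b (fun x => csum (fun k => h k x) l) (csum v l).
Proof. induction l; intros H. apply CIntOK_0.
  unfold csum; simpl. apply CIntOK_add. apply H; left; auto. apply IHl; intros; apply H; right; auto. Qed.

Lemma mint_entry G t i j v : CIntOK 0 t (fun u => G u i j) v -> mint G 0 t i j = v.
Proof. intros [H1 H2]. unfold mint. apply Cx_ext; simpl; apply Rint_IntOK; auto. Qed.

Lemma CIntOK_GM m T F t i j : GM m T F -> 0 <= t <= T -> (i < m)%nat -> (j < m)%nat ->
  CIntOK 0 t (fun u => F u i j) (mint F 0 t i j).
Proof. intros H Ht a b. destruct (H i j a b). split; simpl; eapply IntOK_cont; eauto. Qed.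

Lemma CIntOK_mmul_l m T F t X i j : GM m T F -> 0 <= t <= T -> (j < m)%nat ->
  CIntOK 0 t (fun u => mmul m X (F u) i j) (mmul m X (mint F 0 t) i j).
Proof. intros H Ht Hj. unfold mmul.
  apply (CIntOK_csum 0 t (fun k u => Cxmul (X i k) (F u k j)) (fun k => Cxmul (X i k) (mint F 0 t k j))).
  intros k Hk. apply in_seq in Hk. apply CIntOK_mull. apply (CIntOK_GM m T); auto; lia.
Qed.
Lemma CIntOK_mmul_r m T F t X i j : GM m T F -> 0 <= t <= T -> (i < m)%nat ->
  CIntOK 0 t (fun u => mmul m (F u) X i j) (mmul m (mint F 0 t) X i j).
Proof. intros H Ht Hi. unfold mmul.
  apply (CIntOK_csum 0 t (fun k u => Cxmul (F u i k) (X k j)) (fun k => Cxmul (mint F 0 t i k) (X k j))).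
  intros k Hk. apply in_seq in Hk. apply CIntOK_mulr. apply (CIntOK_GM m T); auto; lia.
Qed.

Lemma comm_mint_l m T F t X : GM m T F -> 0 <= t <= T ->
  mat_eq m (comm m X (mint F 0 t)) (mint (fun u => comm m X (F u)) 0 t).
Proof. intros H Ht i j a b. symmetry; apply mint_entry. unfold comm, madd, mopp.
  apply CIntOK_add; [|apply CIntOK_opp]. eapply CIntOK_mmul_l; eauto. eapply CIntOK_mmul_r; eauto. Qed.
Lemma comm_mint_r m T F t X : GM m T F -> 0 <= t <= T ->
  mat_eq m (comm m (mint F 0 t) X) (mint (fun u => comm m (F u) X) 0 t).
Proof. intros H Ht i j a b. symmetry; apply mint_entry. unfold comm, madd, mopp.
  apply CIntOK_add; [|apply CIntOK_opp]. eapply CIntOK_mmul_r; eauto. eapply CIntOK_mmul_l; eauto. Qed.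

Lemma GM_mint m T F : 0 < T -> GM m T F -> GM m T (fun t => mint F 0 t).
Proof. intros HT H i j a b. destruct (H i j a b). split; unfold mint; simpl; apply cont_Rint; auto. Qed.

Lemma mint_z m F t : 0 <= t -> (forall u, 0 <= u <= t -> mat_eq m (F u) mzero) -> mat_eq m (mint F 0 t) mzero.
Proof. intros Ht H i j a b. unfold mint, mzero, Cx0. f_equal; apply Rint_zero; auto; intros u Hu;
  rewrite H; auto. Qed.

Lemma mint_compat m F G t : (forall u, mat_eq m (F u) (G u)) -> mat_eq m (mint F 0 t) (mint G 0 t).
Proof. intros H i j a b. unfold mint. f_equal; f_equal; apply functional_extensionality; intros u; rewrite H; auto. Qed.

Lemma GM_adch m T (A : R -> Mat) ss F : GM m T F -> GM m T (fun u => adch m A ss (F u)).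
Proof. induction ss; simpl; intros H; auto. apply (GM_comm m T (fun _ => A a) (fun u => adch m A ss (F u))).
  apply GM_const. auto. Qed.

Lemma adch_mint m T A ss F t : GM m T F -> 0 <= t <= T ->
  mat_eq m (adch m A ss (mint F 0 t)) (mint (fun u => adch m A ss (F u)) 0 t).
Proof. induction ss; simpl; intros H Ht. apply meq_refl.
  eapply meq_trans. apply comm_compat. apply meq_refl. apply IHss; auto.
  apply (comm_mint_l m T (fun u => adch m A ss (F u))); auto. apply GM_adch; auto. Qed.

Lemma OmegaUpTo_S m A n k t : OmegaUpTo m A (S n) k t =
  if Nat.leb k n then OmegaUpTo m A n k t else match n with
           | O => mint A 0 t
           | _ => OmegaStep m (OmegaUpTo m A n) A (S n) t
           end.
Proof. reflexivity. Qed.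

Lemma OmegaUp_stab m A n a t : (a <= n)%nat -> OmegaUpTo m A n a t = Omega m A a t.
Proof.
  revert a; induction n; intros a Ha.
  - assert (a = 0%nat) by lia; subst; reflexivity.
  - simpl. destruct (Nat.leb a n) eqn:E.
    + apply Nat.leb_le in E. auto.
    + apply Nat.leb_gt in E. assert (a = S n) by lia; subst. unfold Omega. rewrite OmegaUpTo_S.
      replace (Nat.leb (S n) n) with false by (symmetry; apply Nat.leb_gt; lia). reflexivity.
Qed.

Lemma Omega1 m A t : Omega m A 1 t = mint A 0 t.
Proof. reflexivity. Qed.

Lemma OmegaS m A k t : (1 <= k)%nat -> Omega m A (S k) t =
  mint (fun s => msum (map (fun j => mscal (bernoulli j / INR (fact j))
                                           (adsum m (OmegaUpTo m A k) A s j k))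
                           (seq 1 k))) 0 t.
Proof. intros Hk. unfold Omega. rewrite OmegaUpTo_S. replace (Nat.leb (S k) k) with false by (symmetry; apply Nat.leb_gt; lia).
  destruct k. lia. unfold OmegaStep. replace (S (S k) - 1)%nat with (S k) by lia. reflexivity. Qed.

Lemma GM_adsum m T A om : (forall k, GM m T (om k)) -> GM m T A ->
  forall j r, GM m T (fun s => adsum m om A s j r).
Proof.
  intros Hom HA j; induction j; intros r; simpl.
  - destruct (Nat.eqb r 0). apply HA. apply GM_const.
  - apply (GM_msum m T (fun k s => comm m (om k s) (adsum m om A s j (r - k)))).
    intros; apply GM_comm; auto.
Qed.

Lemma GM_Omega m T A : 0 < T -> GM m T A -> forall n k, GM m T (OmegaUpTo m A n k).
Proof.
  intros HT HA n; induction n; intros k; simpl.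
  - apply GM_const.
  - destruct (Nat.leb k n). apply IHn.
    destruct n. apply GM_mint; auto.
    unfold OmegaStep. apply GM_mint; auto.
    apply (GM_msum m T (fun j s => mscal (bernoulli j / INR (fact j)) (adsum m (OmegaUpTo m A (S n)) A s j (S (S n) - 1)))).
    intros; apply GM_scal. apply GM_adsum; auto.
Qed.

Lemma adsum_z1 m A om s r0 : mat_eq m (comm m (om 1%nat s) (A s)) mzero ->
  (forall a, (2 <= a <= r0)%nat -> mat_eq m (om a s) mzero) ->
  forall j r, (1 <= j)%nat -> (r <= r0)%nat -> mat_eq m (adsum m om A s j r) mzero.
Proof.
  intros H1 H2 j; induction j; intros r Hj Hr. lia.
  simpl. apply msum_z. intros a Ha. apply in_seq in Ha.
  destruct j.
  - simpl. destruct (Nat.eqb (r - a) 0) eqn:E.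
    + apply Nat.eqb_eq in E. assert (a = r) by lia. subst.
      destruct (Nat.eq_dec r 1). subst; auto. apply comm_zl. apply H2; lia.
    + apply comm_zr. apply meq_refl.
  - apply comm_zr. apply IHj; lia.
Qed.

Lemma part1 m T A : (forall t, 0 <= t <= T -> mat_eq m (comm m (A t) (mint A 0 t)) mzero) ->
  forall k, (1 < k)%nat -> forall t, 0 <= t <= T -> mat_eq m (Omega m A k t) mzero.
Proof.
  intros H k; induction k as [k IH] using lt_wf_ind; intros Hk t Ht.
  destruct k as [|k]; [lia|]. rewrite OmegaS by lia.
  apply mint_z. lra. intros u Hu. apply msum_z. intros j Hj. apply in_seq in Hj.
  apply mscal_z. apply adsum_z1 with k; try lia.
  - rewrite OmegaUp_stab by lia. rewrite Omega1. rewrite comm_anti.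
    intros i j' a b. unfold mopp. rewrite H; auto; try lra. unfold mzero, Cxopp, Cx0; simpl; f_equal; ring.
  - intros a Ha. rewrite OmegaUp_stab by lia. apply IH; try lia; lra.
Qed.

Inductive RN (m : nat) (T : R) (A : R -> Mat) : nat -> Mat -> Prop :=
| RN_A : forall s, 0 <= s <= T -> RN m T A 1 (A s)
| RN_comm : forall d s X, 0 <= s <= T -> RN m T A d X -> RN m T A (S d) (comm m (A s) X)
| RN_add : forall d X Y, RN m T A d X -> RN m T A d Y -> RN m T A d (madd X Y)
| RN_opp : forall d X, RN m T A d X -> RN m T A d (mopp X)
| RN_scal : forall d r X, RN m T A d X -> RN m T A d (mscal r X)
| RN_zero : forall d, RN m T A d mzero
| RN_eq : forall d X Y, RN m T A d X -> mat_eq m X Y -> RN m T A d Y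
| RN_int : forall d F t, GM m T F -> 0 <= t <= T -> (forall u, 0 <= u <= t -> RN m T A d (F u)) ->
    RN m T A d (mint F 0 t).

Lemma RN_J m T A a X : RN m T A a X -> forall b Y, RN m T A b Y -> RN m T A (a + b) (comm m X Y).
Proof.
  induction 1; intros b Z HZ.
  - simpl. apply RN_comm; auto.
  - rewrite jacobi. apply RN_add.
    + simpl. apply RN_comm; auto.
    + apply RN_opp. replace (S d + b)%nat with (d + S b)%nat by lia. apply IHRN. apply RN_comm; auto.
  - rewrite comm_addl. apply RN_add; auto.
  - rewrite comm_oppl. apply RN_opp; auto.
  - rewrite comm_scall. apply RN_scal; auto.
  - rewrite comm_0l. apply RN_zero.
  - apply RN_eq with (comm m X Z); auto. apply comm_compat; auto; apply meq_refl.
  - apply RN_eq with (mint (fun u => comm m (F u) Z) 0 t).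
    + apply RN_int; auto. apply (GM_comm m T F (fun _ => Z)); auto. apply GM_const.
    + apply meq_sym. apply comm_mint_r with T; auto.
Qed.

Lemma RN_msum m T A d (f : nat -> Mat) l : (forall j, In j l -> RN m T A d (f j)) -> RN m T A d (msum (map f l)).
Proof. induction l; intros H. apply RN_zero. cbn [map]; rewrite msum_cons. apply RN_add.
  apply H; left; auto. apply IHl; intros; apply H; right; auto. Qed.

Lemma RN_adsum m T A om s r0 : 0 <= s <= T -> (forall a, (1 <= a <= r0)%nat -> RN m T A a (om a s)) ->
  forall j r, (r <= r0)%nat -> RN m T A (S r) (adsum m om A s j r).
Proof.
  intros Hs Hom j; induction j; intros r Hr; simpl.
  - destruct (Nat.eqb r 0) eqn:E. apply Nat.eqb_eq in E; subst. apply RN_A; auto. apply RN_zero.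
  - apply RN_msum. intros a Ha. apply in_seq in Ha.
    replace (S r) with (a + S (r - a))%nat by lia. apply RN_J. apply Hom; lia. apply IHj; lia.
Qed.

Lemma RN_Omega m T A : 0 < T -> GM m T A -> forall k, (1 <= k)%nat -> forall t, 0 <= t <= T -> RN m T A k (Omega m A k t).
Proof.
  intros HT HA k; induction k as [k IH] using lt_wf_ind; intros Hk t Ht.
  destruct k as [|k]; [lia|]. destruct k as [|k].
  - rewrite Omega1. apply RN_int; auto. intros; apply RN_A; lra.
  - rewrite OmegaS by lia. apply RN_int; auto.
    + apply (GM_msum m T (fun j s => mscal (bernoulli j / INR (fact j)) (adsum m (OmegaUpTo m A (S k)) A s j (S k)))).
      intros; apply GM_scal. apply GM_adsum; auto. apply GM_Omega; auto.
    + intros u Hu. apply RN_msum. intros j Hj. apply RN_scal. apply RN_adsum with (S k). lra.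
      intros a Ha. rewrite OmegaUp_stab by lia. apply IH; try lia; lra. lia.
Qed.

Lemma nth_range (P : R -> Prop) l s i : Forall P l -> P s -> P 0 -> P (nth i (l ++ s :: nil) 0).
Proof. intros Hl Hs H0. revert i; induction Hl; intros i; destruct i; simpl; auto.
  destruct i; simpl; auto. Qed.

Lemma RN_kill m T A n : 0 <= T ->
  (forall s : nat -> R, (forall i, (i <= n)%nat -> 0 <= s i <= T) -> mat_eq m (ncomm m A n s) mzero) ->
  forall d X, RN m T A d X -> forall ss, Forall (fun s => 0 <= s <= T) ss ->
  (S n <= length ss + d)%nat -> mat_eq m (adch m A ss X) mzero.
Proof.
  intros HT Hn d X HR; induction HR; intros ss Hss Hl.
  - rewrite <- (firstn_skipn (length ss - n) ss) in Hss |- *.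
    apply Forall_app in Hss as [_ H2].
    rewrite adch_app. apply adch_z.
    assert (L : length (skipn (length ss - n) ss) = n) by (rewrite length_skipn; lia).
    rewrite <- ncomm_adch. rewrite L. apply Hn. intros i _. apply nth_range; auto; lra.
  - replace (adch m A ss (comm m (A s) X)) with (adch m A (ss ++ s :: nil) X)
      by (rewrite adch_app; reflexivity).
    apply IHHR. apply Forall_app; split; auto. rewrite length_app; simpl; lia.
  - rewrite adch_add. intros i j a b. unfold madd. rewrite IHHR1, IHHR2; auto.
    unfold mzero, Cxadd, Cx0; simpl; f_equal; ring.
  - rewrite adch_opp. intros i j a b. unfold mopp. rewrite IHHR; auto.
    unfold mzero, Cxopp, Cx0; simpl; f_equal; ring.
  - rewrite adch_scal. apply mscal_z; auto.
  - rewrite adch_0. apply meq_refl.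
  - eapply meq_trans. apply adch_compat. apply meq_sym; eauto. auto.
  - eapply meq_trans. apply adch_mint with T; auto.
    apply mint_z. lra. intros; auto.
Qed.

Theorem mainTheorem10 (m : nat) (T : R) (A : R -> Mat) :
  0 < T -> mcont_on m A 0 T ->
  (* (i) *)
  ((forall t, 0 <= t <= T -> mat_eq m (comm m (A t) (mint A 0 t)) mzero) ->
   forall k, (1 < k)%nat -> forall t, 0 <= t <= T ->
     mat_eq m (Omega m A k t) mzero /\ mat_eq m (Omega m A 1 t) (mint A 0 t))
  /\
  (* (ii) *)
  (forall n : nat, (1 <= n)%nat ->
   (forall s : nat -> R, (forall i, (i <= n)%nat -> 0 <= s i <= T) ->
      mat_eq m (ncomm m A n s) mzero) ->
   forall k, (n < k)%nat -> forall t, 0 <= t <= T ->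
     mat_eq m (Omega m A k t) mzero).
Proof.
  intros HT HA.
  assert (GA : GM m T A) by exact HA.
  split.
  - intros H k Hk t Ht. split.
    + apply (part1 m T A); auto.
    + rewrite Omega1; apply meq_refl.
  - intros n Hn Hc k Hk t Ht.
    pose proof (RN_Omega m T A HT GA k ltac:(lia) t Ht) as HR.
    pose proof (RN_kill m T A n ltac:(lra) Hc k _ HR nil (Forall_nil _) ltac:(simpl; lia)) as HK.
    exact HK.
Qed.
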